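(* Let $k,a,b$ be positive real numbers and $\{S^{(a,b)}_{k,n}\}_{n\ge0}$ the $k$-FL sequence. For any integers $m\ge n\ge0$, $S^{(a,b)}_{k,m}S^{(a,b)}_{k,n+1}-S^{(a,b)}_{k,m+1}S^{(a,b)}_{k,n}=(-1)^n\{a^2-(k^2+4)b^2\}F_{k,m-n}$.
   Context: The $k$-FL sequence (for positive reals $k,a,b$) is $S^{(a,b)}_{k,0}=2b$, $S^{(a,b)}_{k,1}=bk+a$, $S^{(a,b)}_{k,n}=kS^{(a,b)}_{k,n-1}+S^{(a,b)}_{k,n-2}$. $F_{k,n}$ is the $k$-Fibonacci sequence: $F_{k,0}=0$, $F_{k,1}=1$, $F_{k,n}=kF_{k,n-1}+F_{k,n-2}$. *)

(* Defs.v *)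
From Stdlib Require Import Reals.
Open Scope R_scope.

Fixpoint kfib (k : R) (n : nat) : R :=
  match n with
  | O => 0
  | S O => 1
  | S ((S p) as q) => k * kfib k q + kfib k p
  end.

Fixpoint kFL (k a b : R) (n : nat) : R :=
  match n with
  | O => 2 * b
  | S O => b * k + a
  | S ((S p) as q) => k * kFL k a b q + kFL k a b p
  end.

(* Main.v *)
Require Import Defs.
From Stdlib Require Import Reals Lra Lia.
Open Scope R_scope.

Lemma kFL_SS k a b n : kFL k a b (S (S n)) = k * kFL k a b (S n) + kFL k a b n.
Proof. reflexivity. Qed.
Lemma kfib_SS k n : kfib k (S (S n)) = k * kfib k (S n) + kfib k n.
Proof. reflexivity. Qed.

Lemma base k a b d :
  kFL k a b d * kFL k a b 1 - kFL k a b (S d) * kFL k a b 0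
  = (a ^ 2 - (k ^ 2 + 4) * b ^ 2) * kfib k d
  /\ kFL k a b (S d) * kFL k a b 1 - kFL k a b (S (S d)) * kFL k a b 0
  = (a ^ 2 - (k ^ 2 + 4) * b ^ 2) * kfib k (S d).
Proof.
  induction d as [|d [IH1 IH2]].
  - simpl. split; ring.
  - split; [exact IH2|].
    rewrite (kFL_SS k a b (S d)), (kfib_SS k d).
    rewrite (kFL_SS k a b d) in IH2 |- *.
    revert IH1 IH2. generalize (kFL k a b 1) (kFL k a b 0) (kFL k a b d) (kFL k a b (S d)) (kfib k d) (kfib k (S d)) (a ^ 2 - (k ^ 2 + 4) * b ^ 2).
    intros s1 s0 x y f g c H1 H2.
    replace (c * (k * g + f)) with (k * (c * g) + c * f) by ring.
    rewrite <- H1, <- H2. ring.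
Qed.

Lemma step k a b d n :
  kFL k a b (n + d) * kFL k a b (S n) - kFL k a b (S (n + d)) * kFL k a b n
  = (-1) ^ n * (a ^ 2 - (k ^ 2 + 4) * b ^ 2) * kfib k d.
Proof.
  induction n as [|n IH].
  - simpl plus. rewrite (proj1 (base k a b d)). simpl. ring.
  - replace (S n + d)%nat with (S (n + d)) by lia.
    rewrite (kFL_SS k a b n), (kFL_SS k a b (n + d)).
    transitivity (- (kFL k a b (n + d) * kFL k a b (S n) - kFL k a b (S (n + d)) * kFL k a b n)).
    { ring. }
    rewrite IH. simpl pow. ring.
Qed.

Theorem theorem4p21 (k a b : R) (hk : 0 < k) (ha : 0 < a) (hb : 0 < b)
  (m n : nat) (hmn : (n <= m)%nat) :
  kFL k a b m * kFL k a b (S n) - kFL k a b (S m) * kFL k a b n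
  = (-1) ^ n * (a ^ 2 - (k ^ 2 + 4) * b ^ 2) * kfib k (m - n).
Proof.
  replace m with (n + (m - n))%nat at 1 2 by lia.
  apply step.
Qed.
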